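(* Let $\overline Y$ be a balanced real random variable whose support has at most two points, and let $y_1,y_2$ be independent copies of $\overline Y$. Then for all real numbers $x_1,x_2$, \[ \mathbb{E}_{y_1,y_2}\big(|x_1+y_1|-|x_2+y_2|\big)^2 \;\ge\; \frac14\big(|x_1|-|x_2|\big)^2 . \]
   Context: A random variable is balanced if it has expectation $0$. *)

(* Defs.v *)
From Stdlib Require Import Reals.
Open Scope R_scope.

(* A real random variable whose support has at most two points is described by
   its law: value [a] with probability [p] and value [b] with probability [1-p],
   where 0 <= p <= 1 (a = b, p = 0 or p = 1 cover one-point supports). *)
Record two_point_law := TPL { tp_a : R; tp_b : R; tp_p : R }.

Definition valid_law (Y : two_point_law) : Prop :=
  0 <= tp_p Y <= 1.

Definition expect (Y : two_point_law) (f : R -> R) : R :=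
  tp_p Y * f (tp_a Y) + (1 - tp_p Y) * f (tp_b Y).

Definition balanced (Y : two_point_law) : Prop :=
  expect Y (fun y => y) = 0.

(* expectation of g(y1,y2) for y1,y2 independent copies of Y
   (law of the pair is the product law) *)
Definition expect2 (Y : two_point_law) (g : R -> R -> R) : R :=
  expect Y (fun y1 => expect Y (fun y2 => g y1 y2)).

(* Main.v *)
Require Import Defs.
From Stdlib Require Import Reals Lra Psatz.
Open Scope R_scope.
Lemma c11 p t e1 e2 : 0 <= p <= 1 -> 0 <= t ->
  -t <= e1 <= t -> -t <= e2 <= t ->
  t*(1-2*p) <= e1 -> t*(1-2*p) <= e2 ->
  ((1-p)*(e2-e1))^2 <= 3*(p*(1-p))*(e1^2+e2^2).
Proof.
intros. 
assert (K: (1-p)*(e2-e1)^2 <= 3*p*(e1^2+e2^2)).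
{ destruct (Rle_dec (2/5) p).
  - assert (0 <= (5*p-2)*(e1^2+e2^2)) by (apply Rmult_le_pos; [lra| generalize (pow2_ge_0 e1) (pow2_ge_0 e2); lra]).
    assert (0 <= (1-p)*((e1+e2)^2)) by (apply Rmult_le_pos; [lra|apply pow2_ge_0]).
    nra.
  - destruct (Rle_dec (1/4) p).
  + assert (0 <= (4*p-1)*(e1^2+e2^2)) by (apply Rmult_le_pos; [lra| generalize (pow2_ge_0 e1) (pow2_ge_0 e2); lra]).
    assert (0 <= (1-p)*(e1*e2)) by (apply Rmult_le_pos; [lra|apply Rmult_le_pos; nra]).
    nra.
  + assert (0 <= e1) by nra. assert (0 <= e2) by nra.
    assert (e1^2+e2^2 <= t*(e1+e2)) by nra.
    assert ((1-2*p)*t*(e1+e2) <= 2*(e1*e2)) by nra.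
    assert (0 <= t*(e1+e2)) by nra.
    assert (0 <= (p+2*p^2)*(t*(e1+e2))) by (apply Rmult_le_pos; nra).
    nra. }
assert (0 <= 1-p) by lra.
assert ((1-p)*((1-p)*(e2-e1)^2) <= (1-p)*(3*p*(e1^2+e2^2))) by (apply Rmult_le_compat_l; lra).
nra.
Qed.
Lemma half p t e1 e2 : 0 <= p <= 1 -> 0 <= t ->
  -t <= e1 <= t -> -t <= e2 <= t ->
  t*(1-2*p) <= e1 -> e2 <= t*(1-2*p) ->
  (1-p)*(e1-t*(1-2*p))^2 <= 3*p*(e1^2+e2^2).
Proof.
intros. set (s := t*(1-2*p)) in *.
destruct (Rle_dec (1/2) p).
- assert (s <= 0) by (unfold s; nra).
  assert (0 <= (s-e2)*(-s-e2)) by (apply Rmult_le_pos; lra).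
  assert (e2^2 - s^2 = (s-e2)*(-s-e2)) by ring.
  assert (s^2 <= e2^2) by lra.
  assert (2*(e1^2+s^2) - (e1-s)^2 = (e1+s)^2) by ring.
  assert ((e1-s)^2 <= 2*(e1^2+s^2)) by (generalize (pow2_ge_0 (e1+s)); lra).
  assert (0 <= (5*p-2)*(e1^2+s^2)) by (apply Rmult_le_pos; [lra| generalize (pow2_ge_0 e1) (pow2_ge_0 s); lra]).
  assert ((1-p)*(e1-s)^2 <= (1-p)*(2*(e1^2+s^2))) by (apply Rmult_le_compat_l; lra).
  assert (0 <= 3*p*(e2^2 - s^2)) by (apply Rmult_le_pos; lra).
  nra.
- assert (0 <= s) by (unfold s; nra).
  assert ((e1-s)^2 <= e1^2) by nra.
  assert ((1-p)*(e1-s)^2 <= (1-p)*e1^2) by (apply Rmult_le_compat_l; lra).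
  assert (0 <= 3*p*e2^2) by (generalize (pow2_ge_0 e2); nra).
  destruct (Rle_dec (1/4) p).
  + assert (0 <= (4*p-1)*e1^2) by (apply Rmult_le_pos; [lra|apply pow2_ge_0]).
    nra.
  + assert (e1 - s <= 2*p*t) by (unfold s; nra).
    assert ((e1-s)^2 <= (2*p*t)*e1) by nra.
    assert ((1-p)*(e1-s)^2 <= (1-p)*((2*p*t)*e1)) by (apply Rmult_le_compat_l; lra).
    assert (2*(1-p)*t <= 3*e1) by (unfold s in *; nra).
    assert (0 <= p*e1) by nra.
    assert (p*e1*(2*(1-p)*t) <= p*e1*(3*e1)) by (apply Rmult_le_compat_l; lra).
    nra.
Qed.
Lemma c12 p t e1 e2 d1 d2 : 0 <= p <= 1 -> 0 <= t ->
  -t <= e1 <= t -> -t <= e2 <= t ->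
  d1 <= p*(t+e1) -> d1 = (1-p)*(t-e1) ->
  d2 <= (1-p)*(t-e2) -> d2 = p*(t+e2) ->
  (d1-d2)^2 <= 3*(p*(1-p))*(e1^2+e2^2).
Proof.
intros Hp Ht H1 H2 H5 E1 H8 E2.

  assert (A1: t*(1-2*p) <= e1) by nra.
  assert (A2: e2 <= t*(1-2*p)) by nra.
  assert (Ed: d1 - d2 = (1-p)*(t*(1-2*p)-e1) + p*(t*(1-2*p)-e2)) by (rewrite E1, E2; ring).
  destruct (Rle_dec 0 (d1-d2)).
  + assert (HH := half (1-p) t (-e2) (-e1) ltac:(lra) Ht ltac:(lra) ltac:(lra) ltac:(nra) ltac:(nra)).
    assert (0 <= p*(t*(1-2*p)-e2)) by (apply Rmult_le_pos; lra).
    assert (0 <= d1-d2 <= p*(t*(1-2*p)-e2)) by nra.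
    assert ((d1-d2)^2 <= (p*(t*(1-2*p)-e2))^2) by (apply pow_incr; lra) .
    assert (Ei: (-e2 - t*(1-2*(1-p))) = t*(1-2*p)-e2) by ring.
    rewrite Ei in HH.
    assert (p*((1-(1-p))*(t*(1-2*p)-e2)^2) <= p*(3*(1-p)*((-e2)^2+(-e1)^2))) by (apply Rmult_le_compat_l; lra).
    assert (Ef: (p*(t*(1-2*p)-e2))^2 = p*((1-(1-p))*(t*(1-2*p)-e2)^2)) by ring.
    assert (Eg: p*(3*(1-p)*((-e2)^2+(-e1)^2)) = 3*(p*(1-p))*(e1^2+e2^2)) by ring.
    lra.
  + assert (HH := half p t e1 e2 Hp Ht H1 H2 A1 A2).
    assert (0 <= (1-p)*(e1 - t*(1-2*p))) by (apply Rmult_le_pos; lra).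
    assert (0 <= d2-d1 <= (1-p)*(e1-t*(1-2*p))) by nra.
    assert ((d2-d1)^2 <= ((1-p)*(e1-t*(1-2*p)))^2) by (apply pow_incr; lra) .
    assert ((1-p)*((1-p)*(e1-t*(1-2*p))^2) <= (1-p)*(3*p*(e1^2+e2^2))) by (apply Rmult_le_compat_l; lra).
    assert (Ef: ((1-p)*(e1-t*(1-2*p)))^2 = (1-p)*((1-p)*(e1-t*(1-2*p))^2)) by ring.
    assert (Eg: (d1-d2)^2 = (d2-d1)^2) by ring.
    lra.
Qed.
Lemma abs2 p t e1 e2 d1 d2 : 0 <= p <= 1 -> 0 <= t ->
  -t <= e1 <= t -> -t <= e2 <= t ->
  0 <= d1 -> d1 <= (1-p)*(t-e1) -> d1 <= p*(t+e1) -> (d1 = (1-p)*(t-e1) \/ d1 = p*(t+e1)) ->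
  0 <= d2 -> d2 <= (1-p)*(t-e2) -> d2 <= p*(t+e2) -> (d2 = (1-p)*(t-e2) \/ d2 = p*(t+e2)) ->
  (d1-d2)^2 <= 3*(p*(1-p))*(e1^2+e2^2).
Proof.
intros Hp Ht H1 H2 H3 H4 H5 H6 H7 H8 H9 H10.
assert (Hq: 0 <= p*(1-p)) by nra.
destruct H6 as [E1 | E1]; destruct H10 as [E2 | E2].
- replace (d1-d2) with ((1-p)*(e2-e1)) by (rewrite E1, E2; ring).
  apply c11 with t; try lra; nra.
- apply (c12 p t e1 e2); assumption.
- replace ((d1-d2)^2) with ((d2-d1)^2) by ring.
  replace (e1^2+e2^2) with (e2^2+e1^2) by ring.
  apply (c12 p t e2 e1); assumption.
- replace (d1-d2) with ((1-(1-p))*((-e2)-(-e1))) by (rewrite E1, E2; ring).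
  replace (3*(p*(1-p))*(e1^2+e2^2)) with (3*((1-p)*(1-(1-p)))*((-e1)^2+(-e2)^2)) by ring.
  apply c11 with t; try lra; nra.
Qed.
Ltac ca e := destruct (Rcase_abs e); [rewrite (Rabs_left e) by lra|rewrite (Rabs_right e) by lra].
Lemma perx p t x : 0 <= p <= 1 -> 0 <= t ->
  let fa := Rabs (x + (1-p)*t) in let fb := Rabs (x + -p*t) in
  let e := fa - fb in let d := p*fa + (1-p)*fb - Rabs x in
  -t <= e <= t /\ 0 <= d /\ d <= (1-p)*(t-e) /\ d <= p*(t+e) /\
  (d = (1-p)*(t-e) \/ d = p*(t+e)).
Proof.
intros Hp Ht fa fb e d. unfold d, e, fa, fb.
assert (0 <= p*t) by nra. assert (0 <= (1-p)*t) by nra.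
ca x; ca (x + (1-p)*t); ca (x + -p*t);
 repeat split; try nra.
all: try (left; ring); try (right; ring).
Qed.
Definition Phi p a b x1 x2 :=
 p * (p * (Rabs (x1 + a) - Rabs (x2 + a)) ^ 2 + (1 - p) * (Rabs (x1 + a) - Rabs (x2 + b)) ^ 2) +
 (1 - p) * (p * (Rabs (x1 + b) - Rabs (x2 + a)) ^ 2 + (1 - p) * (Rabs (x1 + b) - Rabs (x2 + b)) ^ 2).

Lemma Phi_swap p a b x1 x2 : Phi p a b x1 x2 = Phi (1-p) b a x1 x2.
Proof. unfold Phi. ring. Qed.

Lemma mainpos p t x1 x2 : 0 <= p <= 1 -> 0 <= t ->
  Phi p ((1-p)*t) (-p*t) x1 x2 >= / 4 * (Rabs x1 - Rabs x2) ^ 2.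
Proof.
intros Hp Ht.
destruct (perx p t x1 Hp Ht) as (P1 & P2 & P3 & P4 & P5).
destruct (perx p t x2 Hp Ht) as (Q1 & Q2 & Q3 & Q4 & Q5).
set (fa1 := Rabs (x1 + (1-p)*t)) in *. set (fb1 := Rabs (x1 + -p*t)) in *.
set (fa2 := Rabs (x2 + (1-p)*t)) in *. set (fb2 := Rabs (x2 + -p*t)) in *.
set (d1 := p*fa1 + (1-p)*fb1 - Rabs x1) in *.
set (d2 := p*fa2 + (1-p)*fb2 - Rabs x2) in *.
assert (K := abs2 p t (fa1-fb1) (fa2-fb2) d1 d2 Hp Ht P1 Q1 P2 P3 P4 P5 Q2 Q3 Q4 Q5).
assert (Id : Phi p ((1-p)*t) (-p*t) x1 x2 =
   ((Rabs x1 - Rabs x2) + (d1 - d2))^2 + (p*(1-p))*((fa1-fb1)^2 + (fa2-fb2)^2)).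
{ unfold Phi. fold fa1 fb1 fa2 fb2. unfold d1, d2. ring. }
rewrite Id.
set (D := Rabs x1 - Rabs x2) in *. set (e := d1 - d2) in *.
assert (Sq : (D+e)^2 - /4*D^2 + e^2/3 = 3/4*(D + 4/3*e)^2) by field.
generalize (pow2_ge_0 (D + 4/3*e)). lra.
Qed.

Theorem claim8 (Y : two_point_law) (hY : valid_law Y) (hbal : balanced Y)
  (x1 x2 : R) :
  expect2 Y (fun y1 y2 => (Rabs (x1 + y1) - Rabs (x2 + y2)) ^ 2)
    >= / 4 * (Rabs x1 - Rabs x2) ^ 2.
Proof.
destruct Y as [a b p]. unfold valid_law, balanced, expect2, expect in *. simpl in *.
change (Phi p a b x1 x2 >= / 4 * (Rabs x1 - Rabs x2) ^ 2).
set (t := a - b).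
assert (Ea : a = (1-p)*t) by (unfold t; lra).
assert (Eb : b = -p*t) by (unfold t; lra).
destruct (Rle_dec 0 t).
- rewrite Ea, Eb. apply mainpos; lra.
- rewrite Phi_swap.
  assert (Eb' : b = (1-(1-p))*(-t)) by (rewrite Eb; ring).
  assert (Ea' : a = -(1-p)*(-t)) by (rewrite Ea; ring).
  rewrite Ea', Eb'. apply mainpos; lra.
Qed.
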